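(* For every integer $d\ge 2$ there is a polynomial $p_d$ of degree exactly $d-2$ such that $v_n^d=p_d(n)$ for all integers $n\ge \lceil d/2\rceil+1$.
   Context: The $2\times n$ Miura-ori $M_{2,n}$ ($n\ge1$) has faces $\alpha_{i,j}$ ($i\in\{1,2\}$, $j\in\{1,\dots,n\}$), interior vertices $x_1,\dots,x_{n-1}$, and creases $e_0$ and $e_{3k-1},e_{3k},e_{3k+1}$ ($k=1,\dots,n-1$). At $x_k$ the creases are left $e_{3k-3}$, top $e_{3k-1}$, right $e_{3k}$, bottom $e_{3k+1}$. Face $\alpha_{1,j}$ is bordered by those of $e_{3j-4}$ (iff $j\ge2$), $e_{3j-3}$, $e_{3j-1}$ (iff $j\le n-1$); $\alpha_{2,j}$ by those of $e_{3j-2}$ (iff $j\ge2$), $e_{3j-3}$, $e_{3j+1}$ (iff $j\le n-1$). An MV assignment $\mu$ maps creases to $\{1,-1\}$; it is locally valid if for each $k$ exactly one of $\mu(e_{3k-1}),\mu(e_{3k}),\mu(e_{3k+1})$ differs from $\mu(e_{3k-3})$. The face flip $\mu_\alpha$ negates $\mu$ on the creases bordering $\alpha$; $\alpha$ is flippable under $\mu$ if $\mu,\mu_\alpha$ are both locally valid. $v_n^d$ denotes the number of locally valid MV assignments of $M_{2,n}$ with exactly $d$ flippable faces, i.e., the number of vertices of degree $d$ in the origami flip graph ${\rm OFG}(M_{2,n})$. *)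

(* Defs.v *)
From mathcomp Require Import all_boot all_order all_algebra.
Set Implicit Arguments. Unset Strict Implicit. Unset Printing Implicit Defensive.

(* Creases are e_0 and e_{3k-1}, e_{3k}, e_{3k+1}
   (k = 1..n-1), i.e. the labels {0} U {2, ..., 3n-2}: 3n-2 creases in total.
   We index them by 'I_(3n-2): position c carries label 0 if c = 0 and c+1
   otherwise. *)
Definition crease (n : nat) := 'I_(3 * n - 2).

Definition crease_label (n : nat) (c : crease n) : nat :=
  if val c == 0 then 0 else (val c).+1.

(* An MV assignment: true stands for +1, false for -1. *)
Definition MV (n : nat) := {ffun crease n -> bool}.

Definition mv_at (n : nat) (mu : MV n) (i : nat) : bool :=
  [exists c : crease n, (crease_label c == i) && mu c].

(* Local validity: at each interior vertex x_k (k = 1..n-1) with left crease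
   e_{3k-3} and top/right/bottom creases e_{3k-1}, e_{3k}, e_{3k+1}, exactly
   one of the latter three differs from the left one. *)
Definition locally_valid (n : nat) (mu : MV n) : bool :=
  [forall k : 'I_n, (1 <= val k) ==>
     (count (fun i => mv_at mu i != mv_at mu (3 * val k - 3))
        [:: 3 * val k - 1; 3 * val k; 3 * val k + 1] == 1)].

(* Faces alpha_{i,j}: i = val r + 1 in {1,2}, j = val s + 1 in {1..n}. *)
Definition face (n : nat) := ('I_2 * 'I_n)%type.

Definition face_creases (n : nat) (f : face n) : seq nat :=
  let j := (val f.2).+1 in
  if val f.1 == 0 then
    (if 2 <= j then [:: 3 * j - 4] else [::]) ++ [:: 3 * j - 3] ++
    (if j <= n - 1 then [:: 3 * j - 1] else [::])
  else
    (if 2 <= j then [:: 3 * j - 2] else [::]) ++ [:: 3 * j - 3] ++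
    (if j <= n - 1 then [:: 3 * j + 1] else [::]).

Definition face_flip (n : nat) (mu : MV n) (f : face n) : MV n :=
  [ffun c => mu c (+) (crease_label c \in face_creases f)].

Definition flippable (n : nat) (mu : MV n) (f : face n) : bool :=
  locally_valid mu && locally_valid (face_flip mu f).

(* v_n^d: number of locally valid MV assignments of M_{2,n} with exactly d
   flippable faces (= number of degree-d vertices of OFG(M_{2,n})). *)
Definition v (n d : nat) : nat :=
  #|[set mu : MV n | locally_valid mu &&
                     (#|[set f : face n | flippable mu f]| == d)]|.

(* Main.v *)
Require Import Defs.
From mathcomp Require Import all_boot all_order all_algebra.
From mathcomp Require Import zify ring.
Import Order.TTheory GRing.Theory Num.Theory.
Local Open Scope ring_scope.

Import Order.TTheory GRing.Theory Num.Theory.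
Local Open Scope ring_scope.

Definition Nb (s : nat) : {poly rat} := \prod_(j < s) ('X - (j%:R)%:P).
Definition Np (s : nat) : {poly rat} := (s`!%:R)^-1 *: Nb s.

Lemma hornerNb s x : (Nb s).[x] = \prod_(j < s) (x - j%:R).
Proof. by rewrite /Nb horner_prod; apply: eq_bigr => j _; rewrite hornerXsubC. Qed.

Lemma NbSl s x : (Nb s.+1).[x + 1] = (x + 1) * (Nb s).[x].
Proof.
rewrite !hornerNb big_ord_recl /= subr0; congr (_ * _).
apply: eq_bigr => j _; rewrite /= /bump /= add1n -natr1; ring.
Qed.

Lemma NbSr s x : (Nb s.+1).[x] = (Nb s).[x] * (x - s%:R).
Proof. by rewrite !hornerNb big_ord_recr. Qed.

Lemma fact_neq0 s : (s`!%:R : rat) != 0.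
Proof. by rewrite pnatr_eq0 -lt0n fact_gt0. Qed.

Lemma NpD s x : (Np s.+1).[x + 1] - (Np s.+1).[x] = (Np s).[x].
Proof.
rewrite /Np !hornerZ NbSl NbSr factS natrM.
have h1 := fact_neq0 s.
have h2 : (s.+1%:R : rat) != 0 by rewrite pnatr_eq0.
rewrite -natr1; rewrite -natr1 in h2; field; apply/andP; split => //.
Qed.

Lemma size_Np s : size (Np s) = s.+1.
Proof.
rewrite /Np size_scale ?invr_eq0 ?fact_neq0 // /Nb size_prod_XsubC.
by rewrite /index_enum -enumT size_enum_ord.
Qed.

Lemma lead_Np s : lead_coef (Np s) = (s`!%:R)^-1.
Proof. by rewrite /Np lead_coefZ lead_coef_prod_XsubC mulr1. Qed.

Lemma size_sub_same (p r : {poly rat}) :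
  size p = size r -> lead_coef p = lead_coef r -> (size (p - r)%R < (size p).+1)%N /\
  ((0 < size p)%N -> (size (p - r)%R < size p)%N).
Proof.
move=> hs hl; split.
  by rewrite ltnS (leq_trans (size_polyD _ _)) // size_polyN hs maxnn.
move=> hp; have Ep : size p = (size p).-1.+1 by rewrite prednK.
rewrite Ep ltnS; apply/leq_sizeP => j hj; rewrite coefB.
case: (ltnP (size p).-1 j) => hsj.
  by rewrite !nth_default ?subrr // -?hs Ep.
have -> : j = (size p).-1 by apply/eqP; rewrite eqn_leq hsj hj.
by move: hl; rewrite /lead_coef -hs => ->; rewrite subrr.
Qed.

Lemma antideriv (q : {poly rat}) : exists P : {poly rat},
  (forall x, P.[x + 1] - P.[x] = q.[x]) /\ (size P <= (size q).+1)%N /\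
  (0 < lead_coef q -> 0 < lead_coef P /\ size P = (size q).+1).
Proof.
have [k] := ubnP (size q); elim: k q => [|k IH] q Hq //.
case Eq: (size q) => [|s].
  move/eqP: Eq; rewrite size_poly_eq0 => /eqP ->.
  exists 0; split; first by move=> x; rewrite !horner0 subrr.
  by rewrite size_poly0 lead_coef0 ltxx.
set c := lead_coef q.
have cn0 : c != 0 by rewrite lead_coef_eq0 -size_poly_eq0 Eq.
set r := (c * s`!%:R) *: Np s.
have hr1 : size r = size q.
  by rewrite Eq /r size_scale ?size_Np // mulf_neq0 ?fact_neq0.
have hr2 : lead_coef r = lead_coef q.
  by rewrite /r lead_coefZ lead_Np -mulrA mulfV ?fact_neq0 ?mulr1.
have [_ hsz0] := size_sub_same _ _ (esym hr1) (esym hr2).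
have hsz : (size (q - r)%R < s.+1)%N by move: (hsz0 (ltac:(by rewrite Eq))); rewrite Eq.
have hk : (size (q - r)%R < k)%N by rewrite Eq in Hq; apply: leq_trans hsz _.
have [P' [HP'1 [HP'2 _]]] := IH (q - r) hk.
exists ((c * s`!%:R) *: Np s.+1 + P'); split.
  move=> x; rewrite !hornerD !(hornerZ (c * s`!%:R)).
  have := NpD s x; have := HP'1 x; rewrite hornerD hornerN /r hornerZ => e1 e2.
  by rewrite opprD addrACA -mulrBr e2 e1 addrC subrK.
have hsP : size ((c * s`!%:R) *: Np s.+1 + P') = s.+2.
  rewrite size_polyDl size_scale ?size_Np ?mulf_neq0 ?fact_neq0 //.
  by rewrite ltnS (leq_trans HP'2).
rewrite hsP; split => // hc.
rewrite lead_coefDl; last by rewrite size_scale ?size_Np ?mulf_neq0 ?fact_neq0 // ltnS (leq_trans HP'2).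
rewrite lead_coefZ lead_Np; split => //.
by rewrite !mulr_gt0 // ?invr_gt0 ltr0n fact_gt0.
Qed.

Import Order.TTheory GRing.Theory Num.Theory.
Local Open Scope ring_scope.

Fixpoint XX (m d : nat) {struct m} : nat :=
  match m with
  | 0 => (d == 2)%N
  | m'.+1 => match d with 0 => 0 | 1 => 2 * YY m' 0 | d'.+2 => XX m' d' + 2 * YY m' d'.+1 end
  end%N
with YY (m d : nat) {struct m} : nat :=
  match m with
  | 0 => (d == 1)%N
  | m'.+1 => YY m' d + match d with 0 => 0 | d'.+1 => YY m' d' + XX m' d' end
  end%N.

Definition EP (f : nat -> nat) (t : nat) (p : {poly rat}) :=
  forall m, (t <= m)%N -> (f m)%:R = p.[m%:R].

Definition Pd (d : nat) := exists pX pY : {poly rat},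
  [/\ EP (XX ^~ d) d./2 pX, size pX = d.-1 & 0 <= lead_coef pX] /\
  [/\ EP (YY ^~ d) d.-1./2 pY, size pY = d & 0 <= lead_coef pY].

Lemma YY0 m : YY m 0 = 0%N.
Proof. by elim: m => //= m ->. Qed.
Lemma XX0 m : XX m 0 = 0%N.
Proof. by case: m. Qed.
Lemma XX1 m : XX m 1 = 0%N.
Proof. by case: m => //= m; rewrite YY0. Qed.
Lemma YY1 m : YY m 1 = 1%N.
Proof. by elim: m => //= m ->; rewrite YY0 XX0. Qed.

Lemma P0 : Pd 0.
Proof.
exists 0, 0; split; split; rewrite ?lead_coef0 ?size_poly0 //; move=> m _;
  by rewrite ?XX0 ?YY0 horner0.
Qed.

Lemma P1 : Pd 1.
Proof.
exists 0, 1; split; split; rewrite ?lead_coef0 ?lead_coef1 ?size_poly0 ?size_poly1 //;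
 move=> m _; by rewrite ?XX1 ?YY1 ?horner0 ?hornerC.
Qed.

Lemma lead_pos (p : {poly rat}) k : size p = k.+1 -> 0 <= lead_coef p -> 0 < lead_coef p.
Proof.
move=> hs hl; rewrite lt_def hl andbT lead_coef_eq0 -size_poly_eq0 hs //.
Qed.

Lemma PS d : Pd d -> Pd d.+1 -> Pd d.+2.
Proof.
move=> [pX0 [pY0 [[eX0 sX0 lX0] [eY0 sY0 lY0]]]] [pX1 [pY1 [[eX1 sX1 lX1] [eY1 sY1 lY1]]]].
set q := pX0 + 2%:R *: pY1.
have sq : size q = d.+1.
  rewrite /q addrC size_polyDl size_scale ?sY1 ?pnatr_eq0 //.
  by rewrite sX0; lia.
have lq : 0 <= lead_coef q.
  rewrite /q addrC lead_coefDl ?lead_coefZ ?mulr_ge0 //.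
  by rewrite size_scale ?sY1 ?pnatr_eq0 // sX0; lia.
set r := pY1 + pX1.
have sr : size r = d.+1 by rewrite /r size_polyDl ?sY1 ?sX1.
have lr : 0 < lead_coef r.
  by apply: (lead_pos _ d); rewrite // /r lead_coefDl ?sY1 ?sX1.
have [P [HP1 [_ /(_ lr) [HP3 HP4]]]] := antideriv r.
set t := (d.+1)./2.
set pY := P + ((YY t d.+2)%:R - P.[t%:R])%:P.
exists (q \Po ('X - 1)), pY; split; split.
- move=> m hm; case: m hm => [|m] hm; first by move: hm; rewrite /=; case: (d./2).
  rewrite horner_comp hornerXsubC -natr1 addrK /= /q hornerD hornerZ natrD natrM.
  rewrite eX0 ?eY1 //=; move: hm => /=; rewrite -!divn2; lia.
- by rewrite size_comp_poly2 ?size_XsubC.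
- by rewrite lead_coef_comp ?size_XsubC // lead_coefXsubC expr1n mulr1.
- move=> m /= hm; rewrite -/t in hm.
  have -> : m = (t + (m - t))%N by rewrite subnKC.
  elim: (m - t)%N => [|i IH].
    by rewrite addn0 /pY hornerD hornerC addrC subrK.
  rewrite addnS /= natrD IH -natr1 /pY !hornerD !hornerC.
  have -> : (YY (t + i) d.+1 + XX (t + i) d.+1)%:R = r.[(t + i)%:R].
    rewrite /r hornerD natrD eY1 ?eX1 //; rewrite /t -!divn2; lia.
  rewrite -HP1; ring.
- by rewrite size_polyDl ?HP4 ?sr // size_polyC; case: (_ == 0).
- rewrite lead_coefDl; first by apply: ltW.
  by rewrite size_polyC HP4 sr; case: (_ == 0).
Qed.

Lemma Pall d : Pd d.
Proof.
suff : Pd d /\ Pd d.+1 by case.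
elim: d => [|d [h1 h2]]; first by split; [exact: P0 | exact: P1].
by split => //; apply: PS.
Qed.

Local Open Scope nat_scope.

Definition wt (a b : nat) : nat := (((a != 2) && (b != 0)) + ((a != 0) && (b != 2)))%N.
Fixpoint Sw (a : nat) (u : seq nat) : nat :=
  match u with [::] => wt a 1 | x :: u' => (wt a x + Sw x u')%N end.
Fixpoint words (m : nat) : seq (seq nat) :=
  match m with
  | 0 => [:: [::]]
  | m'.+1 => [seq 0%N :: u | u <- words m'] ++ [seq 1%N :: u | u <- words m'] ++
             [seq 2%N :: u | u <- words m']
  end.
Definition cnt a m d := count (fun u => Sw a u == d) (words m).

Lemma count_shift (f : seq nat -> nat) k d s :
  count (fun u => (k + f u == d)%N) s = if (k <= d)%N then count (fun u => f u == (d - k)%N) s else 0%N.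
Proof.
case: ifP => hk.
  by apply: eq_count => u /=; apply/eqP/eqP; lia.
rewrite -(count_pred0 s); apply: eq_count => u /=; apply/eqP; lia.
Qed.

Lemma cnt_XY m d : [/\ cnt 1 m d = XX m d, cnt 0 m d = YY m d & cnt 2 m d = YY m d].
Proof.
elim: m d => [|m IH] d.
  by rewrite /cnt /=; split; case: d => [|[|[|d]]].
rewrite /cnt /= !count_cat !count_map.
have E : forall a x, count (preim (cons x) (fun u => Sw a u == d)) (words m) =
   if (wt a x <= d)%N then cnt x m (d - wt a x) else 0%N.
  move=> a x; transitivity (count (fun u => (wt a x + Sw x u == d)%N) (words m)).
    by apply: eq_count.
  exact: count_shift.
rewrite !E /=; clear E.
have e1 d' : cnt 1 m d' = XX m d' by case: (IH d').
have e0 d' : cnt 0 m d' = YY m d' by case: (IH d').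
have e2 d' : cnt 2 m d' = YY m d' by case: (IH d').
by split; case: d => [|[|d]] //=; rewrite ?subn0 ?subn1 ?subn2 /= ?e0 ?e1 ?e2; lia.
Qed.

Lemma mem_words m w : (w \in words m) = (size w == m) && all (fun x => x < 3)%N w.
Proof.
elim: m w => [|m IH] w; first by case: w.
rewrite /= !mem_cat.
case: w => [|x w] /=.
  by apply/negP => /or3P [] /mapP [u _].
have mp : forall y, ((x :: w) \in [seq y :: u | u <- words m]) = (x == y) && (w \in words m).
  move=> y; apply/mapP/andP => [[u hu [-> ->]]|[/eqP -> hw]]; first by split.
  by exists w.
rewrite !mp IH eqSS; clear mp; case: x => [|[|[|x]]] //=; rewrite ?orbF ?andbF //.
Qed.

Lemma uniq_words m : uniq (words m).
Proof.
elim: m => //= m IH.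
have mi : forall y, uniq [seq y :: u | u <- words m].
  by move=> y; rewrite map_inj_uniq // => u v [].
rewrite !cat_uniq !mi /=; apply/and3P; split => //; apply/hasPn => u.
  by rewrite mem_cat => /orP [] /mapP [v _ ->]; apply/negP => /mapP [w _ /eqP].
by move=> /mapP [v _ ->]; apply/negP => /mapP [w _ /eqP].
Qed.

Local Open Scope nat_scope.

Lemma label_inj n (c c' : crease n) : crease_label c = crease_label c' -> c = c'.
Proof.
case: c c' => [x hx] [y hy]; rewrite /crease_label /= => h; apply: val_inj => /=.
move: h; case: ifP => /eqP h1; case: ifP => /eqP h2 //=; lia.
Qed.

Lemma mv_atE n (mu : MV n) c : mv_at mu (crease_label c) = mu c.
Proof.
apply/existsP/idP => [[c' /andP [/eqP /label_inj -> //]]|h].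
by exists c; rewrite eqxx.
Qed.

Definition inr n l := (l == 0) || ((2 <= l) && (l <= 3 * n - 2)).

Lemma label_ex n l : 0 < n -> inr n l -> exists c : crease n, crease_label c = l.
Proof.
move=> hn hl; have h : l.-1 < 3 * n - 2 by move: hl; rewrite /inr; lia.
exists (Ordinal h); rewrite /crease_label /=; move: hl; rewrite /inr.
case: ifP => /eqP; lia.
Qed.

Lemma flipE n (mu : MV n) f l : 0 < n -> inr n l ->
  mv_at (face_flip mu f) l = mv_at mu l (+) (l \in face_creases f).
Proof.
move=> hn /(label_ex _ _ hn) [c <-]; by rewrite !mv_atE ffunE.
Qed.

Definition vok (g : nat -> bool) k :=
  count (fun i => g i != g (3 * k - 3)) [:: 3 * k - 1; 3 * k; 3 * k + 1] == 1.

Lemma validE n (mu : MV n) :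
  locally_valid mu = [forall k : 'I_n, (1 <= val k) ==> vok (mv_at mu) k].
Proof. by []. Qed.

Lemma vok_ext g1 g2 k : g1 (3 * k - 3) = g2 (3 * k - 3) -> g1 (3 * k - 1) = g2 (3 * k - 1) ->
  g1 (3 * k) = g2 (3 * k) -> g1 (3 * k + 1) = g2 (3 * k + 1) -> vok g1 k = vok g2 k.
Proof. by rewrite /vok /= => -> -> -> ->. Qed.

Lemma mem_fc n (r : 'I_2) (s : 'I_n) l :
  (l \in face_creases ((r, s) : face n)) =
  if val r == 0 then
    [|| (2 <= s.+1) && (l == 3 * s.+1 - 4), l == 3 * s.+1 - 3 | (s.+1 <= n - 1) && (l == 3 * s.+1 - 1)]
  else
    [|| (2 <= s.+1) && (l == 3 * s.+1 - 2), l == 3 * s.+1 - 3 | (s.+1 <= n - 1) && (l == 3 * s.+1 + 1)].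
Proof.
rewrite /face_creases /=.
case: (val r == 0); case: (2 <= s.+1); case: (s.+1 <= n - 1); by rewrite /= !inE ?orbF.
Qed.

Lemma fc0 n (r : 'I_2) (s : 'I_n) k : val r = 0 -> 1 <= k < n ->
  let F := face_creases ((r, s) : face n) in
  [/\ (3 * k - 3 \in F) = (k == s.+1), (3 * k - 1 \in F) = (k.+1 == s.+1) || (k == s.+1),
      (3 * k \in F) = (k.+1 == s.+1) & (3 * k + 1 \in F) = false].
Proof.
move=> hr hk /=; rewrite !mem_fc hr /=; have := ltn_ord s; split; lia.
Qed.

Lemma fc1 n (r : 'I_2) (s : 'I_n) k : val r = 1 -> 1 <= k < n ->
  let F := face_creases ((r, s) : face n) in
  [/\ (3 * k - 3 \in F) = (k == s.+1), (3 * k - 1 \in F) = false,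
      (3 * k \in F) = (k.+1 == s.+1) & (3 * k + 1 \in F) = (k.+1 == s.+1) || (k == s.+1)].
Proof.
move=> hr hk /=; rewrite !mem_fc hr /=; have := ltn_ord s; split; lia.
Qed.

Lemma vok_flip0 n (g : nat -> bool) (r : 'I_2) (s : 'I_n) k : val r = 0 -> 1 <= k < n -> vok g k ->
  vok (fun l => g l (+) (l \in face_creases ((r, s) : face n))) k =
  ((k == s.+1) ==> (g (3 * k - 1) == g (3 * k - 3))) &&
  ((k.+1 == s.+1) ==> (g (3 * k + 1) == g (3 * k - 3))).
Proof.
move=> hr hk; have [m1 m2 m3 m4] := fc0 n r s k hr hk.
rewrite /vok /= m1 m2 m3 m4.
case E1: (k == s.+1); case E2: (k.+1 == s.+1) => //=; try lia;
move: (g (3 * k - 3)) (g (3 * k - 1)) (g (3 * k)) (g (3 * k + 1)) => L T R B;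
by case: L; case: T; case: R; case: B.
Qed.

Lemma vok_flip1 n (g : nat -> bool) (r : 'I_2) (s : 'I_n) k : val r = 1 -> 1 <= k < n -> vok g k ->
  vok (fun l => g l (+) (l \in face_creases ((r, s) : face n))) k =
  ((k == s.+1) ==> (g (3 * k + 1) == g (3 * k - 3))) &&
  ((k.+1 == s.+1) ==> (g (3 * k - 1) == g (3 * k - 3))).
Proof.
move=> hr hk; have [m1 m2 m3 m4] := fc1 n r s k hr hk.
rewrite /vok /= m1 m2 m3 m4.
case E1: (k == s.+1); case E2: (k.+1 == s.+1) => //=; try lia;
move: (g (3 * k - 3)) (g (3 * k - 1)) (g (3 * k)) (g (3 * k + 1)) => L T R B;
by case: L; case: T; case: R; case: B.
Qed.

Lemma flipG n (mu : MV n) f : 0 < n -> flippable mu f = locally_valid mu &&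
  [forall k : 'I_n, (1 <= val k) ==> vok (fun l => mv_at mu l (+) (l \in face_creases f)) k].
Proof.
move=> hn; rewrite /flippable (validE _ (face_flip mu f)); congr andb; apply: eq_forallb => k.
case: (ltnP 0 k) => hk //=; have := ltn_ord k => hkn.
by apply: vok_ext; apply: flipE => //; rewrite /inr; lia.
Qed.

Lemma vok_at n (mu : MV n) k : locally_valid mu -> 1 <= k < n -> vok (mv_at mu) k.
Proof.
move=> /forallP hv /andP [h1 h2]; exact: (implyP (hv (Ordinal h2)) h1).
Qed.

Definition letter (g : nat -> bool) k :=
  if g (3 * k - 1) != g (3 * k - 3) then 0 else if g (3 * k) != g (3 * k - 3) then 1 else 2.

Lemma letter_props g k : vok g k ->
  [/\ (letter g k != 0) = (g (3 * k - 1) == g (3 * k - 3)),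
      (letter g k != 2) = (g (3 * k + 1) == g (3 * k - 3)),
      (letter g k == 1) = (g (3 * k) != g (3 * k - 3)) & letter g k < 3].
Proof.
rewrite /letter /vok /=.
move: (g (3 * k - 3)) (g (3 * k - 1)) (g (3 * k)) (g (3 * k + 1)) => L T R B;
by case: L; case: T; case: R; case: B.
Qed.

Lemma flip_face0 n (mu : MV n) (r : 'I_2) (s : 'I_n) : 0 < n -> val r = 0 -> locally_valid mu ->
  flippable mu ((r, s) : face n) =
  ((s.+1 < n) ==> (letter (mv_at mu) s.+1 != 0)) && ((1 <= s) ==> (letter (mv_at mu) s != 2)).
Proof.
move=> hn hr hv; rewrite flipG // hv /=.
apply/forallP/andP => [H|[H1 H2] k].
  split; apply/implyP => hs.
    have hk : 1 <= s.+1 < n by rewrite hs.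
    have := H (Ordinal hs); rewrite /= (vok_flip0 _ _ _ _ _ hr hk (vok_at _ _ _ hv hk)) /= eqxx /=.
    by have [-> _ _ _] := letter_props _ _ (vok_at _ _ _ hv hk) => /andP [].
  have hk : 1 <= s < n by rewrite hs ltn_ord.
  have := H s; rewrite hs /= (vok_flip0 _ _ _ _ _ hr hk (vok_at _ _ _ hv hk)) /= eqxx /=.
  by have [_ -> _ _] := letter_props _ _ (vok_at _ _ _ hv hk) => /andP [].
apply/implyP => hk1; have hk : 1 <= k < n by rewrite hk1 ltn_ord.
rewrite (vok_flip0 _ _ _ _ _ hr hk (vok_at _ _ _ hv hk)); apply/andP; split; apply/implyP => /eqP E.
  have [<- _ _ _] := letter_props _ _ (vok_at _ _ _ hv hk).
  by rewrite E; apply: (implyP H1); rewrite -E ltn_ord.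
have [_ <- _ _] := letter_props _ _ (vok_at _ _ _ hv hk).
move: E => [E]; rewrite E; apply: (implyP H2); rewrite -E //.
Qed.

Lemma flip_face1 n (mu : MV n) (r : 'I_2) (s : 'I_n) : 0 < n -> val r = 1 -> locally_valid mu ->
  flippable mu ((r, s) : face n) =
  ((s.+1 < n) ==> (letter (mv_at mu) s.+1 != 2)) && ((1 <= s) ==> (letter (mv_at mu) s != 0)).
Proof.
move=> hn hr hv; rewrite flipG // hv /=.
apply/forallP/andP => [H|[H1 H2] k].
  split; apply/implyP => hs.
    have hk : 1 <= s.+1 < n by rewrite hs.
    have := H (Ordinal hs); rewrite /= (vok_flip1 _ _ _ _ _ hr hk (vok_at _ _ _ hv hk)) /= eqxx /=.
    by have [_ -> _ _] := letter_props _ _ (vok_at _ _ _ hv hk) => /andP [].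
  have hk : 1 <= s < n by rewrite hs ltn_ord.
  have := H s; rewrite hs /= (vok_flip1 _ _ _ _ _ hr hk (vok_at _ _ _ hv hk)) /= eqxx /=.
  by have [-> _ _ _] := letter_props _ _ (vok_at _ _ _ hv hk) => /andP [].
apply/implyP => hk1; have hk : 1 <= k < n by rewrite hk1 ltn_ord.
rewrite (vok_flip1 _ _ _ _ _ hr hk (vok_at _ _ _ hv hk)); apply/andP; split; apply/implyP => /eqP E.
  have [_ <- _ _] := letter_props _ _ (vok_at _ _ _ hv hk).
  by rewrite E; apply: (implyP H1); rewrite -E ltn_ord.
have [<- _ _ _] := letter_props _ _ (vok_at _ _ _ hv hk).
move: E => [E]; rewrite E; apply: (implyP H2); rewrite -E //.
Qed.

Definition decw n (mu : MV n) := [seq letter (mv_at mu) k | k <- iota 1 n.-1].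
Arguments decw {n}.

Lemma size_decw n (mu : MV n) : size (decw mu) = n.-1.
Proof. by rewrite size_map size_iota. Qed.

Lemma nth_decw n (mu : MV n) i : nth 1 (decw mu) i = if i < n.-1 then letter (mv_at mu) i.+1 else 1.
Proof.
case: ifP => hi; last by rewrite nth_default // size_decw leqNgt hi.
by rewrite (nth_map 0) ?size_iota // nth_iota // add1n.
Qed.

Lemma Sw_sum a w : Sw a w = \sum_(j < (size w).+1) wt (nth 1 (a :: w) j) (nth 1 w j).
Proof.
elim: w a => [|x w IH] a; first by rewrite big_ord1.
by rewrite big_ord_recl /= IH.
Qed.

Definition deg n (mu : MV n) := #|[set f : face n | flippable mu f]|.
Arguments deg {n}.

Lemma deg_sum n (mu : MV n) : deg mu =
  \sum_(s < n) (flippable mu ((ord0, s) : face n) + flippable mu ((ord_max, s) : face n)).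
Proof.
rewrite /deg -sum1_card big_mkcond /=.
rewrite (eq_bigr (fun f : face n => nat_of_bool (flippable mu f))); last first.
  by move=> f _; rewrite inE; case: flippable.
rewrite -(pair_big xpredT xpredT (fun (r : 'I_2) (s : 'I_n) => nat_of_bool (flippable mu (r, s)))) /=.
by rewrite big_ord_recl big_ord1 -big_split.
Qed.

Lemma deg_Sw n (mu : MV n) : 0 < n -> locally_valid mu -> deg mu = Sw 1 (decw mu).
Proof.
move=> hn hv; rewrite deg_sum Sw_sum size_decw prednK //.
apply: eq_bigr => s _.
rewrite (flip_face0 n mu ord0 s hn (erefl 0) hv) (flip_face1 n mu ord_max s hn (erefl 1) hv).
have hs := ltn_ord s.
have -> : nth 1 (1 :: decw mu) s = if 0 < s then letter (mv_at mu) s else 1.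
  case: (val s) hs => [|s'] hs' //=; rewrite nth_decw; case: ifP => //; lia.
have -> : nth 1 (decw mu) s = if s.+1 < n then letter (mv_at mu) s.+1 else 1.
  rewrite nth_decw; have -> : (s < n.-1) = (s.+1 < n) by lia. by [].
rewrite /wt; case: (0 < s); case: (s.+1 < n) => //=;
move: (letter (mv_at mu) s) (letter (mv_at mu) s.+1) => a b;
by case: (a != 0); case: (a != 2); case: (b != 0); case: (b != 2).
Qed.

Definition Lv (b : bool) (w : seq nat) k := b (+) odd (count_mem 1 (take k.-1 w)).
Definition G b w l :=
  if l == 0 then b else Lv b w (l.+1 %/ 3) (+) (nth 1 w (l.+1 %/ 3).-1 == l.+1 %% 3).
Definition enc n b w : MV n := [ffun c => G b w (crease_label c)].

Lemma mv_enc n b w l : 0 < n -> inr n l -> mv_at (enc n b w) l = G b w l.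
Proof. by move=> hn /(label_ex _ _ hn) [c <-]; rewrite mv_atE ffunE. Qed.

Lemma Lv_S b w k : 1 <= k <= size w -> Lv b w k.+1 = Lv b w k (+) (nth 1 w k.-1 == 1).
Proof.
move=> hk; rewrite /Lv /=.
have e : k = k.-1.+1 by lia.
rewrite {1}e (take_nth 1); last by lia.
by rewrite -cats1 count_cat /= addn0 oddD oddb addbA.
Qed.

Lemma G_vert b w k : 1 <= k <= size w ->
  [/\ G b w (3 * k - 3) = Lv b w k, G b w (3 * k - 1) = Lv b w k (+) (nth 1 w k.-1 == 0),
      G b w (3 * k) = Lv b w k (+) (nth 1 w k.-1 == 1) &
      G b w (3 * k + 1) = Lv b w k (+) (nth 1 w k.-1 == 2)].
Proof.
move=> hk; rewrite /G; split.
- case: (k =P 1) => [->|hk1]; first by rewrite /= /Lv /= take0 addbF.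
  have -> : (3 * k - 3 == 0) = false by lia.
  have -> : (3 * k - 3).+1 %/ 3 = k.-1 by lia.
  have -> : (3 * k - 3).+1 %% 3 = 1 by lia.
  by rewrite -Lv_S ?prednK //; lia.
- have -> : (3 * k - 1 == 0) = false by lia.
  have -> : (3 * k - 1).+1 %/ 3 = k by lia.
  by have -> : (3 * k - 1).+1 %% 3 = 0 by lia.
- have -> : (3 * k == 0) = false by lia.
  have -> : (3 * k).+1 %/ 3 = k by lia.
  by have -> : (3 * k).+1 %% 3 = 1 by lia.
- have -> : (3 * k + 1 == 0) = false by lia.
  have -> : (3 * k + 1).+1 %/ 3 = k by lia.
  by have -> : (3 * k + 1).+1 %% 3 = 2 by lia.
Qed.

Lemma vok_enc n b w k : 0 < n -> size w = n.-1 -> 1 <= k < n ->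
  vok (mv_at (enc n b w)) k = vok (G b w) k.
Proof.
move=> hn hw hk; apply: vok_ext; apply: mv_enc => //; rewrite /inr; lia.
Qed.

Lemma nth_lt3 w i : all (fun x => x < 3) w -> nth 1 w i < 3.
Proof.
move=> /allP h; case: (ltnP i (size w)) => hi; last by rewrite nth_default.
exact: h (mem_nth _ hi).
Qed.

Lemma valid_enc n b w : 0 < n -> size w = n.-1 -> all (fun x => x < 3) w ->
  locally_valid (enc n b w).
Proof.
move=> hn hw ha; rewrite validE; apply/forallP => k; apply/implyP => hk1.
have hk : 1 <= k < n by rewrite hk1 ltn_ord.
rewrite vok_enc //; have [e0 e1 e2 e3] := G_vert b w k (ltac:(lia)).
rewrite /vok /= e0 e1 e2 e3.
have := nth_lt3 _ k.-1 ha; move: (nth 1 w k.-1) (Lv b w k) => x L.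
by case: x => [|[|[|x]]] //; case: L.
Qed.

Lemma letter_enc n b w k : 0 < n -> size w = n.-1 -> 1 <= k < n ->
  letter (mv_at (enc n b w)) k = letter (G b w) k.
Proof.
move=> hn hw hk; rewrite /letter !mv_enc //; rewrite /inr; lia.
Qed.

Lemma dec_enc n b w : 0 < n -> size w = n.-1 -> all (fun x => x < 3) w ->
  mv_at (enc n b w) 0 = b /\ decw (enc n b w) = w.
Proof.
move=> hn hw ha; split; first by rewrite mv_enc.
apply: (eq_from_nth (x0 := 1)); first by rewrite size_decw hw.
move=> i; rewrite size_decw => hi; rewrite nth_decw hi letter_enc //; last by lia.
have [e0 e1 e2 e3] := G_vert b w i.+1 (ltac:(lia)).
rewrite /letter e0 e1 e2 /=.
have := nth_lt3 _ i ha; move: (nth 1 w i) (Lv b w i.+1) => x L.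
by case: x => [|[|[|x]]] //; case: L.
Qed.

Lemma enc_dec n (mu : MV n) : 0 < n -> locally_valid mu -> enc n (mv_at mu 0) (decw mu) = mu.
Proof.
move=> hn hv; set g := mv_at mu; set w := decw mu.
have hw : size w = n.-1 by rewrite size_decw.
have hL : forall k, 1 <= k < n -> Lv (g 0) w k = g (3 * k - 3).
  elim => [//|k IH] hk.
  case: (k =P 0) => [->|hk0]; first by rewrite /Lv /= take0 addbF.
  have hk' : 1 <= k < n by lia.
  rewrite Lv_S; last by lia.
  rewrite IH // /w nth_decw; have -> : k.-1 < n.-1 by lia.
  rewrite prednK; last by lia.
  have [_ _ -> _] := letter_props _ _ (vok_at _ _ _ hv hk').
  have -> : 3 * k.+1 - 3 = 3 * k by lia.
  by rewrite -/g; case: (g (3 * k)); case: (g (3 * k - 3)).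
have hG : forall l, inr n l -> G (g 0) w l = g l.
  move=> l hl; case: (l =P 0) => [->|hl0]; first by [].
  set k := l.+1 %/ 3.
  have hk : 1 <= k < n by rewrite /k; move: hl; rewrite /inr; lia.
  have [e0 e1 e2 e3] := G_vert (g 0) w k (ltac:(lia)).
  have hwk : nth 1 w k.-1 = letter g k.
    rewrite /w nth_decw; have -> : k.-1 < n.-1 by lia.
    rewrite prednK //; lia.
  have [p0 p2 p1 _] := letter_props _ _ (vok_at _ _ _ hv hk).
  have [->|[->|->]] : l = 3 * k - 1 \/ l = 3 * k \/ l = 3 * k + 1.
    by rewrite /k; move: hl hl0; rewrite /inr; lia.
  - rewrite e1 hL // hwk -[letter g k == 0]negbK p0.
    by rewrite -/g; case: (g (3 * k - 1)); case: (g (3 * k - 3)).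
  - rewrite e2 hL // hwk p1.
    by rewrite -/g; case: (g (3 * k)); case: (g (3 * k - 3)).
  - rewrite e3 hL // hwk -[letter g k == 2]negbK p2.
    by rewrite -/g; case: (g (3 * k + 1)); case: (g (3 * k - 3)).
apply/ffunP => c; rewrite ffunE -mv_atE hG //.
case: c => [x hx]; rewrite /inr /crease_label /=; case: ifP => /eqP; lia.
Qed.

Lemma letter_lt3 g k : letter g k < 3.
Proof. by rewrite /letter; case: ifP => _ //; case: ifP. Qed.

Lemma v_cnt n d : 0 < n -> v n d = 2 * cnt 1 n.-1 d.
Proof.
move=> hn.
set L := [seq enc n b w | b <- [:: true; false], w <- [seq w <- words n.-1 | Sw 1 w == d]].
have memL : forall mu, (mu \in L) = locally_valid mu && (deg mu == d).
  move=> mu; apply/allpairsP/andP => [[[b w] [hb hw ->]]|[hv hd]].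
    rewrite /= mem_filter mem_words in hw; move/andP: hw => [/eqP hS /andP [/eqP hsz ha]].
    have hv := valid_enc n b w hn hsz ha; split => //.
    by rewrite deg_Sw //; have [_ ->] := dec_enc n b w hn hsz ha; rewrite hS.
  exists (mv_at mu 0, decw mu); split => /=.
  - by case: (mv_at mu 0).
  - rewrite mem_filter mem_words size_decw eqxx -deg_Sw // hd /=.
    by apply/allP => x /mapP [k _ ->]; apply: letter_lt3.
  - by rewrite enc_dec.
have uL : uniq L.
  apply: allpairs_uniq => //; first by rewrite filter_uniq // uniq_words.
  move=> [b1 w1] [b2 w2] /allpairsP [[b1' w1'] [_ h1 [-> ->]]]
         /allpairsP [[b2' w2'] [_ h2 [-> ->]]] /= E.
  move: h1 h2; rewrite /= !mem_filter !mem_words => /andP [_ /andP [/eqP s1 a1]] /andP [_ /andP [/eqP s2 a2]].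
  have [e1 e2] := dec_enc n b1' w1' hn s1 a1; have [e3 e4] := dec_enc n b2' w2' hn s2 a2.
  by rewrite E in e1 e2; rewrite -e1 -e2 e3 e4.
have -> : v n d = #|L|.
  by apply: eq_card => mu; rewrite inE memL.
by rewrite (card_uniqP uL) size_allpairs size_filter.
Qed.


Local Open Scope ring_scope.

Theorem theorem4p11 :
  forall d : nat, (2 <= d)%N ->
  exists p : {poly rat},
    size p = d.-1 /\
    (forall n : nat, (uphalf d + 1 <= n)%N -> (v n d)%:R = p.[n%:R]).
Proof.
move=> d hd; have [pX [pY [[eX sX lX] _]]] := Pall d.
exists (2%:R *: (pX \Po ('X - 1))); split.
  by rewrite size_scale ?pnatr_eq0 // size_comp_poly2 ?size_XsubC.
move=> n hn; have hn0 : (0 < n)%N by lia.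
rewrite v_cnt //; have [-> _ _] := cnt_XY n.-1 d.
rewrite natrM eX; last by move: hn; rewrite uphalfE -!divn2; lia.
rewrite hornerZ horner_comp hornerXsubC.
congr (_ * pX.[_]).
by case: (n) hn0 => // n' _; rewrite -natr1 addrK.
Qed.
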